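(* Let $T:\mathbb C_n[z]\to\mathbb C_m[z]$ be linear with $m=\max\{\deg T(f):f\in\mathbb C_n[z]\}$. Let $C=\Phi^{-1}(H)$ be an open circular domain, $\Phi(z)=\frac{az+b}{cz+d}$, $ad-bc\neq0$ (with $c=0$ if $C$ is a half-plane), and let $S=\phi_m^{-1}T\phi_n:\mathbb C_n[z]\to\mathbb C_m[z]$. The following are equivalent: (i) $T(f)$ is $C$-stable or zero whenever $f$ has degree $n$ and is $C$-stable; (ii) $S(f)$ is $H$-stable or zero whenever $f$ has degree $n$ and is $H$-stable; (iii) $S(f)$ is $H$-stable or zero whenever $f$ has degree at most $n$ and is $H$-stable. Moreover the following are equivalent: (iv) $T(f)\in\pi(\partial C)\cup\{0\}$ whenever $f$ has degree $n$ and $f\in\pi(\partial C)$; (v) $S(f)\in\pi(\mathbb R)\cup\{0\}$ whenever $f$ has degree $n$ and $f\in\pi(\mathbb R)$; (vi) $S(f)\in\pi(\mathbb R)\cup\{0\}$ whenever $f$ has degree at most $n$ and $f\in\pi(\mathbb R)$.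
   Context: $H=\{\Im z>0\}$; an open circular domain is the image of $H$ under a Möbius transformation. For $\Omega\subseteq\mathbb C$, a univariate polynomial is $\Omega$-stable if it is non-zero and has no zeros in $\Omega$, and $\pi(\Omega)$ is the set of non-zero univariate polynomials all of whose zeros lie in $\Omega$. For $k\in\mathbb N$, $\phi_k:\mathbb C_k[z]\to\mathbb C_k[z]$ is the invertible linear map $\phi_k(f)(z)=(cz+d)^kf(\Phi(z))$. *)

(* Defs.v *)
From HB Require Import structures.
From mathcomp Require Import all_boot all_order all_algebra.
From mathcomp Require Import complex reals.
Set Implicit Arguments. Unset Strict Implicit. Unset Printing Implicit Defensive.
Import Order.TTheory GRing.Theory Num.Theory.
Local Open Scope ring_scope.

Section Defs.
Variable R : realType.
Local Notation C := (R[i]).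

Definition upperH : pred C := fun z => 0 < 'Im z.

Definition realLine : pred C := fun z => 'Im z == 0.

Definition mobius (a b c d : C) (z : C) : C := (a * z + b) / (c * z + d).

Definition circ_dom (a b c d : C) : pred C :=
  fun z => (c * z + d != 0) && upperH (mobius a b c d z).

Definition boundary (A : pred C) : C -> Prop :=
  fun z => forall e : R, 0 < e ->
    (exists w, `|w - z| < (e%:C)%C /\ A w) /\ (exists w, `|w - z| < (e%:C)%C /\ ~~ A w).

Definition is_half_plane (A : pred C) : Prop :=
  exists u v : C, u != 0 /\ forall z, A z = (0 < 'Im (u * z + v)).

Definition stable (Om : C -> Prop) (f : {poly C}) : Prop :=
  f != 0 /\ forall z, Om z -> ~~ root f z.

Definition zeros_in (Om : C -> Prop) (f : {poly C}) : Prop :=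
  f != 0 /\ forall z, root f z -> Om z.

(* phi_k(f)(z) = (c z + d)^k f(Phi z) = sum_i f_i (a z + b)^i (c z + d)^(k-i),
   for f in C_k[z]. *)
Definition phi (a b c d : C) (k : nat) (f : {poly C}) : {poly C} :=
  \sum_(i < k.+1) f`_i *: (('X * a%:P + b%:P) ^+ i * ('X * c%:P + d%:P) ^+ (k - i)).

End Defs.

(* Main.v *)
Require Import Defs.
From HB Require Import structures.
From mathcomp Require Import all_boot all_order all_algebra.
From mathcomp Require Import complex reals.
From mathcomp Require Import ring lra zify.
Import Order.TTheory GRing.Theory Num.Theory.
Local Open Scope ring_scope.

Set Implicit Arguments. Unset Strict Implicit. Unset Printing Implicit Defensive.
Local Notation "x %:C" := (real_complex _ x) (format "x %:C") : ring_scope.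

Section Norms.
Variable R : realType.
Local Notation C := (R[i]).

Definition nm (z : C) : R := Normc.normc z.

Lemma nmE (z : C) : `|z| = (nm z)%:C.
Proof. by case: z. Qed.

Lemma nm_ge0 z : 0 <= nm z.
Proof. by case: z => x y; rewrite /nm /= sqrtr_ge0. Qed.

Lemma nmM x y : nm (x * y) = nm x * nm y.
Proof. exact: Normc.normcM. Qed.

Lemma nmD x y : nm (x + y) <= nm x + nm y.
Proof. by rewrite -lecR rmorphD /= -!nmE ler_normD. Qed.

Lemma nmN x : nm (- x) = nm x.
Proof. by apply: complexI; rewrite -!nmE normrN. Qed.

Lemma nm_eq0 x : (nm x == 0) = (x == 0).
Proof. by apply/eqP/eqP => [/Normc.eq0_normc|->] //; rewrite /nm Normc.normc0. Qed.

Lemma nm_gt0 x : x != 0 -> 0 < nm x.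
Proof. by move=> x0; rewrite lt_def nm_eq0 x0 nm_ge0. Qed.

Lemma nm0 : nm 0 = 0. Proof. exact: Normc.normc0. Qed.
Lemma nm1 : nm 1 = 1. Proof. exact: Normc.normc1. Qed.

Lemma nmB x y : nm (x - y) <= nm x + nm y.
Proof. by rewrite -(nmN y) nmD. Qed.

Lemma nm_Im x : `|complex.Im x| <= nm x.
Proof.
case: x => a b; rewrite /nm /=.
rewrite -sqrtr_sqr ler_sqrt ?addr_ge0 ?sqr_ge0 // lerDr sqr_ge0 //.
Qed.

Lemma nm_Im' x : complex.Im x <= nm x.
Proof. exact: le_trans (ler_norm _) (nm_Im x). Qed.

Lemma nm_Re x : `|complex.Re x| <= nm x.
Proof.
case: x => a b; rewrite /nm /=.
rewrite -sqrtr_sqr ler_sqrt ?addr_ge0 ?sqr_ge0 // lerDl sqr_ge0 //.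
Qed.

Lemma nm_real (y : R) : nm (y%:C) = `|y|.
Proof. by rewrite /nm /= expr0n /= addr0 sqrtr_sqr. Qed.

Lemma nm_iy (y : R) : nm (Complex 0 y) = `|y|.
Proof. by rewrite /nm /= expr0n /= add0r sqrtr_sqr. Qed.

Lemma nmBr x y : nm x - nm y <= nm (x - y).
Proof.
rewrite lerBlDr; have := nmD (x - y) y; by rewrite subrK.
Qed.

Lemma nmX x k : nm (x ^+ k) = nm x ^+ k.
Proof. by elim: k => [|k IH]; rewrite ?expr0 ?nm1 // !exprS nmM IH. Qed.

Lemma nmV x : nm (x^-1) = (nm x)^-1.
Proof. exact: Normc.normcV. Qed.

Lemma nm_prod (I : Type) (r : seq I) (F : I -> C) :
  nm (\prod_(i <- r) F i) = \prod_(i <- r) nm (F i).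
Proof.
elim: r => [|x r IH]; first by rewrite !big_nil nm1.
by rewrite !big_cons nmM IH.
Qed.

Lemma nm_sum (I : Type) (r : seq I) (F : I -> C) :
  nm (\sum_(i <- r) F i) <= \sum_(i <- r) nm (F i).
Proof.
elim: r => [|x r IH]; first by rewrite !big_nil nm0.
rewrite !big_cons; apply: le_trans (nmD _ _) _; by rewrite lerD2l.
Qed.

End Norms.

Set Implicit Arguments. Unset Strict Implicit. Unset Printing Implicit Defensive.
Local Notation "x %:C" := (real_complex _ x) (format "x %:C") : ring_scope.

Section Q.
Variable R : realType.
Local Notation C := (R[i]).
Local Notation Im := complex.Im.

Lemma abs_s (s : R) : s * s = 1 -> `|s| = 1.
Proof.
move=> ss; have : `|s| * `|s| = 1 by rewrite -normrM ss normr1.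
move=> h; have h0 := normr_ge0 s.
nra.
Qed.

Lemma factor_ineq (s y : R) (w r : C) : s * s = 1 -> s * Im r <= 0 ->
  0 < s * Im w -> 0 <= y ->
  (s * Im w) * nm (w + Complex 0 (s * y) - r) <= (s * Im w + y) * nm (w - r).
Proof.
move=> ss hr hw hy.
have e : w + Complex 0 (s * y) - r = (w - r) + Complex 0 (s * y) by ring.
rewrite e.
have h1 := nmD (w - r) (Complex 0 (s * y)).
rewrite nm_iy normrM abs_s // mul1r (ger0_norm hy) in h1.
have h2 : s * Im w <= nm (w - r).
  have : s * Im (w - r) <= nm (w - r).
    apply: le_trans (ler_norm _) _; rewrite normrM abs_s // mul1r; exact: nm_Im.
  rewrite raddfB /= mulrBr; lra.
have h3 := nm_ge0 (w - r).
nra.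
Qed.

Lemma prod_ineq (s y : R) (w : C) (rs : seq C) : s * s = 1 ->
  (forall r, r \in rs -> s * Im r <= 0) -> 0 < s * Im w -> 0 <= y ->
  (s * Im w) ^+ size rs * \prod_(r <- rs) nm (w + Complex 0 (s * y) - r)
  <= (s * Im w + y) ^+ size rs * \prod_(r <- rs) nm (w - r).
Proof.
move=> ss hrs hw hy; elim: rs hrs => [|r rs IH] hrs.
  by rewrite !big_nil /= !expr0.
rewrite !big_cons /= !exprS.
have hr : s * Im r <= 0 by apply: hrs; rewrite mem_head.
have IH' := IH (fun z hz => hrs z (mem_behead (s:=r :: rs) hz)).
have f := factor_ineq ss hr hw hy.
set A := (s * Im w) ^+ size rs; set B := (s * Im w + y) ^+ size rs.
set P1 := \prod_(_ <- rs) _; set P2 := \prod_(_ <- rs) nm (w - _).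
have hP1 : 0 <= P1 by apply: prodr_ge0 => i _; exact: nm_ge0.
have hA : 0 <= A by apply: exprn_ge0; lra.
have hn := nm_ge0 (w + Complex 0 (s * y) - r).
have hn2 := nm_ge0 (w - r).
have hB : 0 <= B by apply: exprn_ge0; lra.
rewrite mulrACA [X in _ <= X]mulrACA.
apply: ler_pM; [apply: mulr_ge0; lra| exact: mulr_ge0| exact: f| exact: IH'].
Qed.

Definition Hs (s : R) (z : C) := 0 < s * Im z.

Lemma Qlemma (s y : R) (w : C) (p : {poly C}) (N : nat) : s * s = 1 ->
  (forall z, root p z -> s * Im z <= 0) -> (size p <= N.+1)%N ->
  0 < s * Im w -> 0 <= y ->
  (s * Im w) ^+ N * nm p.[w + Complex 0 (s * y)] <= (s * Im w + y) ^+ N * nm p.[w].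
Proof.
move=> ss hroots hsz hw hy.
have [->|p0] := eqVneq p 0; first by rewrite !horner0 nm0 !mulr0.
case: (closed_field_poly_normal p) => rs prs.
have hrs : forall r, r \in rs -> s * Im r <= 0.
  move=> r hr; apply: hroots; rewrite prs rootE hornerZ horner_prod.
  rewrite mulf_eq0; apply/orP; right; rewrite prodf_seq_eq0.
  by apply/hasP; exists r => //=; rewrite hornerXsubC subrr eqxx.
have szrs : size rs = (size p).-1.
  by rewrite {1}prs size_scale ?lead_coef_eq0 // size_prod_XsubC.
have le : (size rs <= N)%N by rewrite szrs; case: (size p) hsz.
rewrite prs !hornerZ !horner_prod !nmM !nm_prod.
under eq_bigr do rewrite hornerXsubC.
under [X in _ <= _ * (_ * X)]eq_bigr do rewrite hornerXsubC.
have := prod_ineq ss hrs hw hy.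
rewrite -(subnKC le) !exprD.
set a := (s * Im w) ^+ size rs; set b := (s * Im w + y) ^+ size rs.
set a' := (s * Im w) ^+ (N - size rs); set b' := (s * Im w + y) ^+ (N - size rs).
set P1 := \prod_(_ <- rs) _; set P2 := \prod_(_ <- rs) nm (w - _).
move=> h.
have ha' : 0 <= a' by apply: exprn_ge0; lra.
have hab' : a' <= b' by apply: lerXn2r; rewrite ?nnegrE; lra.
have hL := nm_ge0 (lead_coef p).
have hP1 : 0 <= P1 by apply: prodr_ge0 => i _; exact: nm_ge0.
have hP2 : 0 <= P2 by apply: prodr_ge0 => i _; exact: nm_ge0.
have ha : 0 <= a by apply: exprn_ge0; lra.
have hb : 0 <= b by apply: exprn_ge0; lra.
have e1 : a * a' * (nm (lead_coef p) * P1) = (nm (lead_coef p) * a') * (a * P1) by ring.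
have e2 : b * b' * (nm (lead_coef p) * P2) = (nm (lead_coef p) * b') * (b * P2) by ring.
rewrite e1 e2; apply: le_trans (ler_wpM2l _ h) _; first exact: mulr_ge0.
apply: ler_wpM2r; first exact: mulr_ge0.
exact: ler_wpM2l.
Qed.

End Q.

Set Implicit Arguments. Unset Strict Implicit. Unset Printing Implicit Defensive.
Local Notation "x %:C" := (real_complex _ x) (format "x %:C") : ring_scope.

Section Lim.
Variable R : realType.
Local Notation C := (R[i]).
Local Notation Im := complex.Im.

Definition noroot (s : R) (q : {poly C}) := q = 0 \/ forall z, root q z -> s * Im z <= 0.

Lemma nm_dist_le (x y : C) (e : R) : nm (x - y) <= e -> nm y <= nm x + e.
Proof.
move=> h; have := nmBr y x; have -> : y - x = - (x - y) by ring.
rewrite nmN; lra.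
Qed.

Lemma nm_dist_ge (x y : C) (e : R) : nm (x - y) <= e -> nm x <= nm y + e.
Proof. by move=> h; have := nmBr x y; lra. Qed.

Lemma Qzero (s : R) (N : nat) (p : {poly C}) (w : C) : s * s = 1 ->
  (size p <= N.+1)%N -> p != 0 -> 0 < s * Im w ->
  (forall y, 0 <= y -> (s * Im w) ^+ N * nm p.[w + Complex 0 (s * y)]
                       <= (s * Im w + y) ^+ N * nm p.[w]) ->
  p.[w] != 0.
Proof.
move=> ss hsz p0 hw hQ; apply/negP => /eqP pw0.
have hA : 0 < (s * Im w) ^+ N by apply: exprn_gt0.
have allr : forall y, 0 <= y -> root p (w + Complex 0 (s * y)).
  move=> y hy; have := hQ y hy; rewrite pw0 nm0 mulr0 => h.
  have h0 := nm_ge0 p.[w + Complex 0 (s * y)].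
  have : nm p.[w + Complex 0 (s * y)] == 0.
    rewrite eq_le h0 andbT; rewrite pmulr_rle0 // in h.
  by rewrite nm_eq0 rootE.
set rs := [seq w + Complex 0 (s * (k%:R)) | k <- iota 1 N.+1].
have : (size rs < size p)%N.
  apply: max_poly_roots => //.
    by apply/allP => x /mapP [k _ ->]; apply: allr; exact: ler0n.
  rewrite map_inj_uniq ?iota_uniq // => k1 k2 /eqP.
  rewrite -subr_eq0 => /eqP h.
  have : Complex 0 (s * k1%:R) - Complex 0 (s * k2%:R) = 0.
    by rewrite -h; ring.
  case=> _; move/eqP; rewrite subr_eq0 => /eqP h2.
  have s0 : s != 0 by apply/eqP => s0; move: ss; rewrite s0 mul0r => /eqP; rewrite eq_sym oner_eq0.
  by move: h2 => /(mulfI s0) /eqP; rewrite eqr_nat => /eqP.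
rewrite size_map size_iota; move: hsz; rewrite ltnNge => -> //.
Qed.

Lemma Qlimit (s y : R) (N : nat) (p : {poly C}) (w : C) :
  0 < s * Im w -> 0 <= y ->
  (forall eta, 0 < eta -> exists q : {poly C},
     nm (q.[w] - p.[w]) <= eta /\
     nm (q.[w + Complex 0 (s * y)] - p.[w + Complex 0 (s * y)]) <= eta /\
     (s * Im w) ^+ N * nm q.[w + Complex 0 (s * y)] <= (s * Im w + y) ^+ N * nm q.[w]) ->
  (s * Im w) ^+ N * nm p.[w + Complex 0 (s * y)] <= (s * Im w + y) ^+ N * nm p.[w].
Proof.
move=> hw hy hfam.
set A := (s * Im w) ^+ N; set B := (s * Im w + y) ^+ N.
have hA : 0 <= A by apply: exprn_ge0; lra.
have hB : 0 <= B by apply: exprn_ge0; lra.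
apply/ler_addgt0Pr => e he.
have heta : 0 < e / (A + B + 1) by apply: divr_gt0 => //; lra.
case: (hfam _ heta) => q [h1 [h2 h3]].
set eta := e / (A + B + 1) in heta h1 h2.
have ee : (A + B + 1) * eta = e by rewrite /eta mulrC -mulrA mulVf ?mulr1 //; lra.
have i1 := nm_dist_le h2.
have i2 := nm_dist_ge h1.
set P1 := nm p.[_] in i1 *; set Q1 := nm q.[_] in i1 h3.
set P0 := nm p.[w] in i2 *; set Q0 := nm q.[w] in i2 h3.
have hP1 : A * P1 <= A * (Q1 + eta) by apply: ler_wpM2l.
have hQ0 : B * Q0 <= B * (P0 + eta) by apply: ler_wpM2l.
have he2 : 0 <= eta by lra.
rewrite mulrDr in hP1; rewrite mulrDr in hQ0; rewrite !mulrDl mul1r in ee.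
rewrite -/A -/B in h3. lra.
Qed.

Lemma stable_limit (s : R) (N : nat) (p : {poly C}) : s * s = 1 ->
  (size p <= N.+1)%N ->
  (forall (z1 z2 : C) (eta : R), 0 < eta -> exists q : {poly C},
     (size q <= N.+1)%N /\ noroot s q /\
     nm (q.[z1] - p.[z1]) <= eta /\ nm (q.[z2] - p.[z2]) <= eta) ->
  noroot s p.
Proof.
move=> ss hsz hfam.
have [->|p0] := eqVneq p 0; first by left.
right => z hz; rewrite leNgt; apply/negP => hzs.
suff hQ : forall y, 0 <= y -> (s * Im z) ^+ N * nm p.[z + Complex 0 (s * y)]
                       <= (s * Im z + y) ^+ N * nm p.[z].
  by move: (Qzero ss hsz p0 hzs hQ); rewrite -rootE hz.
move=> y hy; apply: Qlimit => // eta heta.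
case: (hfam z (z + Complex 0 (s * y)) eta heta) => q [qs [qn [h1 h2]]].
exists q; split => //; split => //.
case: qn => [->|qn]; first by rewrite !horner0 nm0 !mulr0.
exact: Qlemma.
Qed.

End Lim.

Set Implicit Arguments. Unset Strict Implicit. Unset Printing Implicit Defensive.
Local Notation "x %:C" := (real_complex _ x) (format "x %:C") : ring_scope.

Section PolyGen.
Variable F : fieldType.

Lemma coefM_top (p q : {poly F}) (i j : nat) : (size p <= i.+1)%N -> (size q <= j.+1)%N ->
  (p * q)`_(i + j) = p`_i * q`_j.
Proof.
move=> hp hq; rewrite coefM.
have hi : (i < (i + j).+1)%N by rewrite ltnS leq_addr.
rewrite (bigD1 (Ordinal hi)) //= addKn big1 ?addr0 // => l /eqP hl.
have hl' : (nat_of_ord l != i) by apply/eqP => e; apply: hl; apply: val_inj.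
case: (ltngtP l i) hl' => // [lt|gt] _.
  rewrite [q`__]nth_default ?mulr0 //; apply: leq_trans hq _.
  by rewrite ltn_subRL ltn_add2r.
by rewrite [p`__]nth_default ?mul0r //; apply: leq_trans hp _.
Qed.

Lemma size_exp_le (p : {poly F}) (n : nat) : (size p <= 2)%N -> (size (p ^+ n) <= n.+1)%N.
Proof.
move=> hp; elim: n => [|n IH]; first by rewrite expr0 size_poly1.
rewrite exprS; have := size_mul_leq p (p ^+ n); lia.
Qed.

Lemma coef_exp_top (p : {poly F}) (n : nat) : (size p <= 2)%N -> (p ^+ n)`_n = p`_1 ^+ n.
Proof.
move=> hp; elim: n => [|n IH]; first by rewrite !expr0 coef1.
by rewrite exprS -add1n coefM_top // ?IH ?exprS // size_exp_le.
Qed.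

End PolyGen.
Section PolyNum.
Variable F : numFieldType.
Lemma poly_eq_all (p : {poly F}) : (forall n : nat, p.[n%:R] = 0) -> p = 0.
Proof.
move=> h; apply/eqP; apply: contraT => p0.
have : (size (iota 0 (size p)) < size p)%N.
  have := @max_poly_roots _ p [seq (n%:R : F) | n <- iota 0 (size p)] p0.
  rewrite size_map; apply.
    by apply/allP => x /mapP [n _ ->]; rewrite rootE h.
  rewrite map_inj_uniq ?iota_uniq // => x y /eqP.
  by rewrite eqr_nat => /eqP.
by rewrite size_iota ltnn.
Qed.

Lemma poly_eq_except (p q : {poly F}) (w0 : F) :
  (forall z, z != w0 -> p.[z] = q.[z]) -> p = q.
Proof.
move=> h; apply/eqP; rewrite -subr_eq0; apply/eqP.
suff : (p - q) * ('X - w0%:P) = 0.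
  by move/eqP; rewrite mulf_eq0 polyXsubC_eq0 orbF => /eqP.
apply: poly_eq_all => n; rewrite hornerM hornerXsubC.
have [->|ne] := eqVneq (n%:R : F) w0; first by rewrite subrr mulr0.
by rewrite hornerD hornerN h // subrr mul0r.
Qed.

End PolyNum.

Section Phi.
Variable R : realType.
Local Notation C := (R[i]).
Variables (a b c d : C).

Local Notation lin1 := ('X * a%:P + b%:P).
Local Notation lin2 := ('X * c%:P + d%:P).

Lemma size_lin (u v : C) : (size ('X * u%:P + v%:P)%R <= 2)%N.
Proof.
apply: leq_trans (size_polyD _ _) _; rewrite geq_max size_polyC.
have := size_mul_leq 'X u%:P; rewrite size_polyX size_polyC.
case: (u != 0); case: (v != 0) => //=; lia.
Qed.

Lemma coef1_lin (u v : C) : ('X * u%:P + v%:P)`_1 = u.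
Proof. rewrite coefD coefMC coefX coefC /=. by rewrite mul1r addr0. Qed.

Lemma size_phi_term (k i : nat) : (i <= k)%N ->
  (size (lin1 ^+ i * lin2 ^+ (k - i))%R <= k.+1)%N.
Proof.
move=> ik; have h1 := size_exp_le i (size_lin a b).
have h2 := size_exp_le (k - i) (size_lin c d).
have := size_mul_leq (lin1 ^+ i) (lin2 ^+ (k - i)). move: h1 h2. set s1 := size (lin1 ^+ i). set s2 := size (lin2 ^+ _). set s3 := size _. lia.
Qed.

Lemma size_phi (k : nat) (f : {poly C}) : (size (phi a b c d k f) <= k.+1)%N.
Proof.
rewrite /phi; apply: leq_trans (size_sum _ _ _) _.
apply/bigmax_leqP => i _; apply: leq_trans (size_scale_leq _ _) _.
apply: size_phi_term; by rewrite -ltnS.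
Qed.

Lemma phi_lin (k : nat) (al : C) (f g : {poly C}) :
  phi a b c d k (al *: f + g) = al *: phi a b c d k f + phi a b c d k g.
Proof.
rewrite /phi scaler_sumr -big_split /=; apply: eq_bigr => i _.
by rewrite coefD coefZ scalerDl scalerA.
Qed.

Lemma phi0 (k : nat) : phi a b c d k 0 = 0.
Proof. by rewrite /phi big1 // => i _; rewrite coef0 scale0r. Qed.

Lemma phi_top (k : nat) (f : {poly C}) :
  (phi a b c d k f)`_k = \sum_(i < k.+1) f`_i * (a ^+ i * c ^+ (k - i)).
Proof.
rewrite /phi coef_sum; apply: eq_bigr => i _; rewrite coefZ; congr (_ * _).
have ik : (i <= k)%N by rewrite -ltnS.
have := @coefM_top _ (lin1 ^+ i) (lin2 ^+ (k - i)) i (k - i).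
rewrite subnKC // => ->; rewrite ?size_exp_le ?size_lin //.
by rewrite !coef_exp_top ?size_lin // !coef1_lin.
Qed.

Lemma phi_eval_gen (k : nat) (f : {poly C}) (z : C) :
  (phi a b c d k f).[z] = \sum_(i < k.+1) f`_i * ((a * z + b) ^+ i * (c * z + d) ^+ (k - i)).
Proof.
rewrite /phi horner_sum; apply: eq_bigr => i _.
by rewrite hornerZ hornerM !horner_exp !hornerE ![_ * a]mulrC ![_ * c]mulrC.
Qed.

Lemma phi_eval (k : nat) (f : {poly C}) (z : C) : (size f <= k.+1)%N ->
  c * z + d != 0 -> (phi a b c d k f).[z] = (c * z + d) ^+ k * f.[mobius a b c d z].
Proof.
move=> hs hz; rewrite phi_eval_gen (horner_coef_wide _ hs) mulr_sumr.
apply: eq_bigr => i _; have ik : (i <= k)%N by rewrite -ltnS.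
rewrite /mobius expr_div_n.
have -> : (c * z + d) ^+ k = (c * z + d) ^+ i * (c * z + d) ^+ (k - i) by rewrite -exprD subnKC.
field; by rewrite expf_neq0.
Qed.

Lemma phi_eval_pole (k : nat) (f : {poly C}) (z : C) :
  c * z + d = 0 -> (phi a b c d k f).[z] = f`_k * (a * z + b) ^+ k.
Proof.
move=> hz; rewrite phi_eval_gen hz big_ord_recr /= subnn expr0 mulr1 big1 ?add0r //.
move=> i _; rewrite expr0n subn_eq0 leqNgt ltn_ord /= !mulr0 //.
Qed.

Lemma phi_top_eval (k : nat) (f : {poly C}) (w : C) : (size f <= k.+1)%N ->
  a - c * w = 0 -> (phi a b c d k f)`_k = c ^+ k * f.[w].
Proof.
move=> hs hw; rewrite phi_top.
have -> : a = c * w by apply/eqP; rewrite -subr_eq0 hw.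
rewrite (horner_coef_wide _ hs) mulr_sumr; apply: eq_bigr => i _.
have ik : (i <= k)%N by rewrite -ltnS.
have -> : c ^+ k = c ^+ i * c ^+ (k - i) by rewrite -exprD subnKC.
rewrite exprMn; ring.
Qed.

End Phi.

Set Implicit Arguments. Unset Strict Implicit. Unset Printing Implicit Defensive.
Local Notation "x %:C" := (real_complex _ x) (format "x %:C") : ring_scope.

Section Mob.
Variable R : realType.
Local Notation C := (R[i]).
Variables (a b c d : C).
Hypothesis hD : a * d - b * c != 0.
Local Notation D := (a * d - b * c).
Local Notation Phi := (mobius a b c d).
Local Notation Psi := (mobius d (- b) (- c) a).

Lemma pole_num z : c * z + d = 0 -> a * z + b != 0.
Proof.
move=> hz; apply/eqP => hz2; move: hD.
have -> : D = a * (c * z + d) - c * (a * z + b) by ring.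
by rewrite hz hz2 !mulr0 subrr eqxx.
Qed.

Lemma psi_den z : a - c * z != 0 -> c * Psi z + d = D / (a - c * z).
Proof. move=> h; rewrite /mobius; field; done. Qed.

Lemma psi_den_neq0 z : a - c * z != 0 -> c * Psi z + d != 0.
Proof. by move=> h; rewrite psi_den // mulf_neq0 // invr_eq0. Qed.

Lemma phi_psi z : a - c * z != 0 -> Phi (Psi z) = z.
Proof.
move=> h; have h3 : - c * z + a != 0 by rewrite mulNr addrC.
rewrite /mobius; field.
have -> : c * (d * z - b) + d * (- c * z + a) = D by ring.
by rewrite h3 hD.
Qed.

Lemma phi_den z : c * z + d != 0 -> a - c * Phi z = D / (c * z + d).
Proof. move=> h; rewrite /mobius; field; done. Qed.

Lemma phi_den_neq0 z : c * z + d != 0 -> a - c * Phi z != 0.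
Proof. by move=> h; rewrite phi_den // mulf_neq0 // invr_eq0. Qed.

Lemma psi_phi z : c * z + d != 0 -> Psi (Phi z) = z.
Proof.
move=> h; rewrite /mobius; field.
have -> : - c * (a * z + b) + a * (c * z + d) = D by ring.
by rewrite h hD.
Qed.

Lemma a_or_c : a != 0 \/ c != 0.
Proof.
case: (eqVneq a 0) => [a0|]; last by left.
right; apply/eqP => c0; move: hD; by rewrite a0 c0 !mul0r mulr0 subrr eqxx.
Qed.

Lemma phi_inv (k : nat) (f : {poly C}) : (size f <= k.+1)%N ->
  phi d (- b) (- c) a k (phi a b c d k f) = D ^+ k *: f.
Proof.
move=> hs.
pose w0 := if c == 0 then 0 else a / c.
apply: (poly_eq_except (w0 := w0)) => z hz.
have hz' : a - c * z != 0.
  rewrite /w0 in hz; case: (eqVneq c 0) hz => [c0|c0] hz.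
    rewrite c0 mul0r subr0; case: a_or_c => //; by rewrite c0 eqxx.
  apply: contra hz; rewrite subr_eq0 => /eqP ->; by rewrite [c * z]mulrC mulfK.
have hz2 : - c * z + a != 0 by rewrite mulNr addrC.
rewrite phi_eval ?size_phi // phi_eval // ?psi_den_neq0 // phi_psi // hornerZ.
rewrite psi_den // mulrA -exprMn; congr (_ ^+ _ * _); rewrite -mulNr addrC; field; done.
Qed.

End Mob.

Set Implicit Arguments. Unset Strict Implicit. Unset Printing Implicit Defensive.
Local Notation "x %:C" := (real_complex _ x) (format "x %:C") : ring_scope.

Section Cont.
Variable R : realType.
Local Notation C := (R[i]).
Local Notation Im := complex.Im.

Lemma ImB (u v : C) : Im (u - v) = Im u - Im v.
Proof. by case: u => ? ?; case: v. Qed.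

Lemma ImD (u v : C) : Im (u + v) = Im u + Im v.
Proof. by case: u => ? ?; case: v. Qed.

Lemma Im_iy (t : R) : Im (Complex 0 t) = t.
Proof. by []. Qed.

Lemma upperHE (z : C) : upperH z = (0 < Im z).
Proof. by rewrite /upperH -complexIm ltcR. Qed.

Lemma realLineE (z : C) : realLine z = (Im z == 0).
Proof. by rewrite /realLine -complexIm; apply/eqP/eqP => [[]|->]. Qed.

Lemma ltnmE (u : C) (e : R) : (`|u| < e%:C) = (nm u < e).
Proof. by rewrite nmE ltcR. Qed.

Lemma mob_cont (al be ga de z : C) (eps : R) : ga * z + de != 0 -> 0 < eps ->
  exists2 e : R, 0 < e & forall w, nm (w - z) < e ->
    ga * w + de != 0 /\ nm (mobius al be ga de w - mobius al be ga de z) < eps.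
Proof.
move=> hz heps.
set q := nm (ga * z + de); have hq : 0 < q by exact: nm_gt0.
set K := nm ga; have hK : 0 <= K := nm_ge0 ga.
set Dn := nm (al * de - be * ga); have hDn : 0 <= Dn := nm_ge0 (al * de - be * ga).
set e1 := q / (2 * (K + 1)); set e2 := eps * q ^+ 2 / (2 * (Dn + 1)).
have he1 : 0 < e1 by apply: divr_gt0 => //; lra.
have he2 : 0 < e2 by apply: divr_gt0; [apply: mulr_gt0 => //; exact: exprn_gt0|lra].
exists (Num.min e1 e2); first by rewrite lt_min he1 he2.
move=> w; rewrite lt_min => /andP [hw1 hw2].
set dist := nm (w - z) in hw1 hw2 *; have hd : 0 <= dist := nm_ge0 (w - z).
have hP : q / 2 <= nm (ga * w + de).
  have e : ga * w + de = (ga * z + de) - (- (ga * (w - z))) by ring.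
  rewrite e; apply: le_trans (nmBr _ _); rewrite nmN nmM -/K -/dist -/q.
  have : K * dist <= K * e1 by apply: ler_wpM2l => //; exact: ltW.
  have : K * e1 <= q / 2.
    rewrite /e1 mulrA ler_pdivrMr; last lra.
    have -> : q / 2 * (2 * (K + 1)) = q * K + q by field.
    rewrite mulrC; lra.
  lra.
have hPn : ga * w + de != 0 by rewrite -nm_eq0 gt_eqF //; apply: lt_le_trans hP; lra.
split => //.
have eq : mobius al be ga de w - mobius al be ga de z =
  (al * de - be * ga) * (w - z) / ((ga * w + de) * (ga * z + de)).
  rewrite /mobius; field; by rewrite hPn hz.
rewrite eq nmM nmV !nmM -/q -/dist -/Dn.
set P := nm (ga * w + de) in hP *.
have hP0 : 0 < P by apply: lt_le_trans hP; lra.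
rewrite ltr_pdivrMr; last exact: mulr_gt0.
have h1 : Dn * dist <= (Dn + 1) * dist by rewrite mulrDl mul1r lerDl.
have h2 : (Dn + 1) * dist < (Dn + 1) * e2 by rewrite ltr_pM2l //; lra.
have h3 : (Dn + 1) * e2 = eps * q ^+ 2 / 2 by rewrite /e2; field; lra.
have h4 : eps * (q / 2 * q) <= eps * (P * q).
  by apply: ler_wpM2l; [lra| apply: ler_wpM2r => //; lra].
have h5 : eps * q ^+ 2 / 2 = eps * (q / 2 * q) by rewrite expr2; field.
lra.
Qed.

End Cont.

Section Bdry.
Variable R : realType.
Local Notation C := (R[i]).
Local Notation Im := complex.Im.
Variables (a b c d : C).
Hypothesis hD : a * d - b * c != 0.
Local Notation D := (a * d - b * c).
Local Notation Phi := (mobius a b c d).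
Local Notation Psi := (mobius d (- b) (- c) a).
Local Notation Cd := (circ_dom a b c d).

Lemma CdE z : Cd z = (c * z + d != 0) && (0 < Im (Phi z)).
Proof. by rewrite /circ_dom upperHE. Qed.

Lemma bdry_to z : boundary Cd z -> c * z + d = 0 \/ Im (Phi z) = 0.
Proof.
move=> hb; case: (eqVneq (c * z + d) 0) => hz; first by left.
right; apply/eqP; apply: contraT => hI.
have hIp : 0 < `|Im (Phi z)| by rewrite normr_gt0.
case: (mob_cont a b hz hIp) => e he hcont.
case: (hb e he) => [[w1 [hw1 hC1]] [w2 [hw2 hC2]]].
rewrite ltnmE in hw1; rewrite ltnmE in hw2.
have key : forall w, nm (w - z) < e -> c * w + d != 0 /\
    `|Im (Phi w) - Im (Phi z)| < `|Im (Phi z)|.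
  move=> w hw; case: (hcont w hw) => h1 h2; split => //.
  by rewrite -ImB; apply: le_lt_trans (nm_Im _) h2.
case: (ltgtP (Im (Phi z)) 0) => [neg|pos|eq0]; last by move: hI; rewrite eq0 eqxx.
- case: (key w1 hw1) => _; move: hC1; rewrite CdE => /andP [_ p1].
  rewrite (ltr0_norm neg) => h; have := ler_norm (Im (Phi w1) - Im (Phi z)); lra.
- case: (key w2 hw2) => n2; move: hC2; rewrite CdE n2 /= -leNgt => p2.
  rewrite (gtr0_norm pos) => h; have := ler_norm (- (Im (Phi w2) - Im (Phi z))).
  rewrite normrN; lra.
Qed.

Lemma c_neq0_pole z : c * z + d = 0 -> c != 0.
Proof.
move=> hz; apply/eqP => c0; move: hz hD; rewrite c0 mul0r add0r => ->.
by rewrite mulr0 mulr0 subrr eqxx.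
Qed.

Lemma bdry_from z : c * z + d = 0 \/ Im (Phi z) = 0 -> boundary Cd z.
Proof.
move=> hz e he; split; last first.
  exists z; rewrite subrr ltnmE nm0; split => //; rewrite CdE.
  case: hz => [->|->]; by rewrite ?eqxx ?ltxx ?andbF.
case: (eqVneq (c * z + d) 0) => hz0.
- have c0 := c_neq0_pole hz0.
  have nc : 0 < nm c by exact: nm_gt0.
  have hDn : 0 < nm D by exact: nm_gt0.
  set Y := (nm a + nm D / (nm c * e) + 1) / nm c.
  have hY : nm c * Y = nm a + nm D / (nm c * e) + 1 by rewrite /Y; field; lra.
  have hq : 0 <= nm D / (nm c * e) by apply: divr_ge0; [lra| apply: mulr_ge0; lra].
  set zeta : C := Complex 0 Y.
  have hbig : nm D / (nm c * e) + 1 <= nm (a - c * zeta).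
    have := nmBr (c * zeta) a; rewrite nmM nm_iy.
    have hY0 : 0 <= Y by apply: divr_ge0; [have := nm_ge0 a; lra| lra].
    rewrite (ger0_norm hY0) hY.
    have -> : c * zeta - a = - (a - c * zeta) by ring.
    rewrite nmN; lra.
  have hne : a - c * zeta != 0 by rewrite -nm_eq0 gt_eqF //; apply: lt_le_trans hbig; lra.
  exists (Psi zeta); split.
    have -> : Psi zeta - z = D / (c * (a - c * zeta)).
      have hcz : c * z = - d by apply/eqP; rewrite -subr_eq0 opprK hz0.
      have -> : z = - d / c by rewrite -hcz [c * z]mulrC mulfK.
      rewrite /mobius; field; by rewrite hne c0.
    rewrite ltnmE nmM nmV nmM.
    have hpos : 0 < nm c * nm (a - c * zeta) by apply: mulr_gt0 => //; lra.
    rewrite ltr_pdivrMr //.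
    have h1 : nm D / (nm c * e) * (nm c * e) = nm D by field; lra.
    have : e * (nm c * (nm D / (nm c * e) + 1)) <= e * (nm c * nm (a - c * zeta)).
      by apply: ler_wpM2l; [lra| apply: ler_wpM2l; lra].
    have -> : e * (nm c * (nm D / (nm c * e) + 1)) = nm D + e * nm c.
      by field; lra.
    have : 0 < e * nm c by apply: mulr_gt0.
    lra.
  rewrite CdE psi_den_neq0 //= phi_psi //.
  rewrite Im_iy /Y; apply: divr_gt0 => //; have := nm_ge0 a; lra.
- have hI : Im (Phi z) = 0 by case: hz => // h; move: hz0; rewrite h eqxx.
  clear hz; rename hz0 into hz.
  set z0 := Phi z.
  have hden : - c * z0 + a != 0 by rewrite mulNr addrC phi_den_neq0.
  case: (mob_cont d (- b) hden he) => e' he' hcont.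
  set zeta := z0 + Complex 0 (e' / 2).
  have hdist : nm (zeta - z0) < e'.
    have -> : zeta - z0 = Complex 0 (e' / 2) by rewrite /zeta; ring.
    rewrite nm_iy gtr0_norm; lra.
  case: (hcont zeta hdist) => h1 h2.
  have hne : a - c * zeta != 0 by rewrite -mulNr addrC.
  exists (Psi zeta); split.
    by rewrite ltnmE -[z in _ - z](psi_phi hD hz).
  rewrite CdE psi_den_neq0 //= phi_psi // /zeta ImD hI Im_iy add0r; lra.
Qed.

Lemma bdryE z : boundary Cd z <-> c * z + d = 0 \/ Im (Phi z) = 0.
Proof. by split; [exact: bdry_to| exact: bdry_from]. Qed.

End Bdry.

Set Implicit Arguments. Unset Strict Implicit. Unset Printing Implicit Defensive.
Local Notation "x %:C" := (real_complex _ x) (format "x %:C") : ring_scope.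

Section Approx.
Variable R : realType.
Local Notation C := (R[i]).
Local Notation Im := complex.Im.
Variable n : nat.

Lemma size_exact (p : {poly C}) (k : nat) : (size p <= k.+1)%N -> p`_k != 0 -> size p = k.+1.
Proof.
move=> h1 h2; apply/eqP; rewrite eqn_leq h1 /=; rewrite ltnNge; apply/negP => h.
by move: h2; rewrite nth_default ?eqxx.
Qed.

Definition dist (f g : {poly C}) : R := \sum_(i < n.+1) nm (f`_i - g`_i).

Lemma dist_ge0 f g : 0 <= dist f g.
Proof. by apply: sumr_ge0 => i _; exact: nm_ge0. Qed.

Lemma dist_tri f g h : dist f h <= dist f g + dist g h.
Proof.
rewrite /dist -big_split /=; apply: ler_sum => i _.
have -> : f`_i - h`_i = (f`_i - g`_i) + (g`_i - h`_i) by ring.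
exact: nmD.
Qed.

Lemma dist_refl f : dist f f = 0.
Proof. by rewrite /dist big1 // => i _; rewrite subrr nm0. Qed.

Definition linF (L : {poly C} -> C) := forall (k : C) (f g : {poly C}),
  (size f <= n.+1)%N -> (size g <= n.+1)%N -> L (k *: f + g) = k * L f + L g.

Lemma linF0 L : linF L -> L 0 = 0.
Proof.
move=> hL; have := hL (-1) 0 0; rewrite scaler0 addr0 size_poly0 => /(_ isT isT).
by rewrite mulN1r addNr.
Qed.

Lemma linF_sum L (j : nat) (cf : nat -> C) (P : nat -> {poly C}) : linF L ->
  (forall i, (i < j)%N -> (size (P i) <= n.+1)%N) ->
  L (\sum_(i < j) cf i *: P i) = \sum_(i < j) cf i * L (P i).
Proof.
move=> hL; elim: j => [|j IH] hP; first by rewrite !big_ord0 linF0.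
rewrite !big_ord_recr /= addrC hL ?hP //.
  rewrite IH; first by rewrite addrC.
  move=> i hi; apply: hP; exact: ltnW.
apply: leq_trans (size_sum _ _ _) _; apply/bigmax_leqP => i _.
apply: leq_trans (size_scale_leq _ _) _; apply: hP; exact: ltnW (ltn_ord i).
Qed.

Lemma poly_expand (p : {poly C}) : (size p <= n.+1)%N ->
  p = \sum_(i < n.+1) p`_i *: 'X^i.
Proof.
move=> hs; rewrite -poly_def; apply/polyP => i; rewrite coef_poly.
case: ltnP => // h; rewrite nth_default //; exact: leq_trans hs h.
Qed.

Lemma linF_expand L (p : {poly C}) : linF L -> (size p <= n.+1)%N ->
  L p = \sum_(i < n.+1) p`_i * L 'X^i.
Proof.
move=> hL hs; rewrite {1}(poly_expand hs).
by rewrite (@linF_sum L n.+1 (fun i => p`_i) (fun i => 'X^i) hL) // => i hi;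
  rewrite size_polyXn.
Qed.

End Approx.


Set Implicit Arguments. Unset Strict Implicit. Unset Printing Implicit Defensive.
Local Notation "x %:C" := (real_complex _ x) (format "x %:C") : ring_scope.
Section Approx2.
Variable R : realType.
Local Notation C := (R[i]).
Local Notation Im := complex.Im.
Variable n : nat.
Local Notation dist := (@dist R n).

Definition RootsIn (K : C -> Prop) (g : {poly C}) := g != 0 /\ forall z, root g z -> K z.

Variable K : C -> Prop.
Hypothesis hKr : forall r : R, K r%:C.
Hypothesis hKs : forall z (t : R), K z -> K (z + t%:C).

Lemma liftA (k : nat) (g : {poly C}) : RootsIn K g -> (size g + k = n.+1)%N ->
  forall eta, 0 < eta -> exists g', [/\ RootsIn K g', size g' = n.+1 & dist g' g <= eta].
Proof.
elim: k g => [|k IH] g hg hs eta heta.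
  by exists g; split => //; [rewrite -hs addn0| rewrite dist_refl ltW].
set M := dist ('X * g) 0.
have hM : 0 <= M by exact: dist_ge0.
set eps := eta / (2 * (M + 1)).
have heps : 0 < eps by apply: divr_gt0 => //; lra.
have e0 : eps%:C != 0 by rewrite -[0]/((0:R)%:C) (inj_eq (@complexI _)) gt_eqF.
set a := (- eps^-1)%:C.
have ea : eps%:C * a = -1 by rewrite /a -rmorphM /= mulrN mulfV ?gt_eqF // rmorphN rmorph1.
set g1 := (eps%:C) *: (g * ('X - a%:P)).
have g1E : g1 = g + (eps%:C) *: ('X * g).
  rewrite /g1 mulrBr scalerBr [g * a%:P]mulrC mul_polyC scalerA ea scaleN1r opprK.
  by rewrite addrC [g * 'X]mulrC.
have hg1 : RootsIn K g1.
  case: hg => g0 hgr; split.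
    by rewrite scaler_eq0 negb_or e0 mulf_neq0 // polyXsubC_eq0.
  move=> z; rewrite /g1 rootZ // rootM => /orP [/hgr //|].
  by rewrite root_XsubC => /eqP ->; exact: hKr.
have hs1 : (size g1 + k = n.+1)%N.
  case: hg => g0 _.
  rewrite /g1 size_scale // size_mul ?polyXsubC_eq0 // size_XsubC.
  move: hs; set s0 := size g; rewrite addn2 /=; lia.
have he2 : 0 < eta / 2 by lra.
case: (IH g1 hg1 hs1 _ he2) => g' [hg' hs' hd'].
exists g'; split => //.
apply: le_trans (@dist_tri R n g' g1 g) _.
have : dist g1 g <= eta / 2.
  have -> : dist g1 g = eps * M.
    rewrite /M /dist mulr_sumr; apply: eq_bigr => i _.
    rewrite g1E coefD coef0 subr0 (addrC g`_i) addrK coefZ nmM nm_real.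
    by rewrite gtr0_norm.
  have hE : eps * (2 * (M + 1)) = eta.
    rewrite /eps mulfVK // gt_eqF //; apply: mulr_gt0; lra.
  have hE' : 2 * (eps * M) + 2 * eps = eta.
    by rewrite -hE; ring.
  lra.
lra.
Qed.

End Approx2.

Set Implicit Arguments. Unset Strict Implicit. Unset Printing Implicit Defensive.
Local Notation "x %:C" := (real_complex _ x) (format "x %:C") : ring_scope.

Section Taylor.
Variable R : realType.
Local Notation C := (R[i]).
Variable n : nat.
Local Notation dist := (@dist R n).
Local Notation linF := (@linF R n).

Definition gt (g : {poly C}) (t : R) : {poly C} :=
  \sum_(i < n.+1) (t%:C ^+ i) *: nderivn i g.

Lemma size_nderivn_le (g : {poly C}) i : (size (nderivn i g) <= size g - i)%N.
Proof. exact: size_poly. Qed.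

Lemma size_nderivn_le2 (g : {poly C}) i : (size g <= n.+1)%N -> (size (nderivn i g) <= n.+1)%N.
Proof. move=> h; apply: leq_trans (size_nderivn_le g i) _; apply: leq_trans h; exact: leq_subr. Qed.

Lemma gt_eval (g : {poly C}) t x : (size g <= n.+1)%N -> (gt g t).[x] = g.[x + t%:C].
Proof.
move=> hs; rewrite (nderiv_taylor_wide _ hs); last exact: mulrC.
rewrite /gt horner_sum; apply: eq_bigr => i _; by rewrite hornerZ mulrC.
Qed.

Lemma size_gt (g : {poly C}) t : (size g <= n.+1)%N -> (size (gt g t) <= n.+1)%N.
Proof.
move=> hs; apply: leq_trans (size_sum _ _ _) _; apply/bigmax_leqP => i _.
apply: leq_trans (size_scale_leq _ _) _; exact: size_nderivn_le2.
Qed.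

Lemma coef_gt_top (g : {poly C}) t : (size g <= n.+1)%N -> (gt g t)`_n = g`_n.
Proof.
move=> hs; rewrite /gt coef_sum big_ord_recl /= expr0 scale1r nderivn0 big1 ?addr0 //.
move=> i _; rewrite coefZ coef_nderivn nth_default ?mul0rn ?mulr0 //.
apply: leq_trans hs _; rewrite /bump /=; lia.
Qed.

Lemma dist_gt (g : {poly C}) t : (size g <= n.+1)%N -> 0 <= t -> t <= 1 ->
  dist (gt g t) g <= t * \sum_(j < n.+1) \sum_(i < n) nm ((nderivn i.+1 g)`_j).
Proof.
move=> hs ht0 ht1; rewrite /dist mulr_sumr; apply: ler_sum => j _.
rewrite /gt coef_sum big_ord_recl /= expr0 scale1r nderivn0 (addrC g`_j) addrK.
apply: le_trans (nm_sum _ _) _; rewrite mulr_sumr; apply: ler_sum => i _.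
rewrite coefZ nmM nmX nm_real ger0_norm //.
apply: ler_wpM2r; first exact: nm_ge0.
rewrite /bump /= add1n exprS; apply: ler_piMr => //; exact: exprn_ile1.
Qed.

Lemma lin_gt (L : {poly C} -> C) (g : {poly C}) t : linF L -> (size g <= n.+1)%N ->
  L (gt g t) = (\poly_(i < n.+1) L (nderivn i g)).[t%:C].
Proof.
move=> hL hs; rewrite horner_poly /gt.
rewrite (@linF_sum R n L n.+1 (fun i => t%:C ^+ i) (fun i => nderivn i g) hL).
  by apply: eq_bigr => i _; rewrite mulrC.
move=> i _; exact: size_nderivn_le2.
Qed.

Lemma triangular (L : {poly C} -> C) (g : {poly C}) : linF L -> size g = n.+1 ->
  (forall i, (i < n.+1)%N -> L (nderivn i g) = 0) ->
  forall h : {poly C}, (size h <= n.+1)%N -> L h = 0.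
Proof.
move=> hL hs hz.
have gn : g`_n != 0.
  have : g != 0 by rewrite -size_poly_eq0 hs.
  by move=> g0; have := lead_coef_eq0 g; rewrite /lead_coef hs /= => ->.
suff H : forall j, (j <= n.+1)%N -> forall h : {poly C}, (size h <= j)%N -> L h = 0.
  by move=> h; apply: H.
elim=> [|j IH] hj h hh.
  by move: hh; rewrite leqn0 size_poly_eq0 => /eqP ->; exact: (@linF0 R n L hL).
set e := nderivn (n - j) g.
have jn : (j <= n)%N by [].
have he : e`_j != 0.
  rewrite /e coef_nderivn subnK // mulrn_eq0 negb_or gn andbT -lt0n bin_gt0; lia.
have hse : (size e <= j.+1)%N.
  apply: leq_trans (size_nderivn_le _ _) _; rewrite hs; lia.
set cc := h`_j / e`_j.
set h' := h - cc *: e.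
have hh' : (size h' <= j)%N.
  apply/leq_sizeP => l hl; rewrite /h' coefB coefZ.
  case: (ltngtP l j) hl => // [lt|eq] _.
    rewrite !nth_default ?mulr0 ?subr0 //; [exact: leq_trans hse lt| exact: leq_trans hh lt].
  by rewrite eq /cc divfK // subrr.
have -> : h = cc *: e + h' by rewrite /h' addrC subrK.
have s1 : (size e <= n.+1)%N := leq_trans hse hj.
have s2 : (size h' <= n.+1)%N := leq_trans hh' (leq_trans (leqnSn j) hj).
rewrite hL // hz; last lia.
rewrite mulr0 add0r; apply: IH => //; exact: ltnW.
Qed.

End Taylor.

Set Implicit Arguments. Unset Strict Implicit. Unset Printing Implicit Defensive.
Local Notation "x %:C" := (real_complex _ x) (format "x %:C") : ring_scope.

Section ApproxB.
Variable R : realType.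
Local Notation C := (R[i]).
Variable n : nat.
Local Notation dist := (@dist R n).
Local Notation linF := (@linF R n).

Lemma pick_t (Q : {poly C}) (t0 : R) : Q != 0 -> 0 < t0 ->
  exists t : R, [/\ 0 < t, t <= t0 & Q.[t%:C] != 0].
Proof.
move=> Q0 ht0.
set ts := [seq t0 / (k.+1)%:R | k <- iota 0 (size Q)].
case: (boolP (has (fun t : R => Q.[t%:C] != 0) ts)).
  move=> /hasP [t /mapP [k _ ->] hQ]; exists (t0 / (k.+1)%:R); split => //.
    by apply: divr_gt0 => //; rewrite ltr0n.
  have hk : (1 : R) <= k.+1%:R by rewrite ler1n.
  rewrite ler_pdivrMr ?ltr0n //; nra.
rewrite -all_predC => hall.
have : (size [seq t%:C | t <- ts] < size Q)%N.
  apply: max_poly_roots => //.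
    apply/allP => x /mapP [t ht ->]; move/allP: hall => /(_ t ht) /=.
    by rewrite negbK rootE.
  rewrite map_inj_uniq; last exact: complexI.
  rewrite map_inj_uniq ?iota_uniq // => k1 k2 /eqP.
  rewrite eqr_div ?pnatr_eq0 // => /eqP h.
  have t00 : t0 != 0 by rewrite gt_eqF.
  move/(mulfI t00): h => /eqP; rewrite eqr_nat => /eqP [] //.
by rewrite !size_map size_iota ltnn.
Qed.

Variable K : C -> Prop.
Hypothesis hKr : forall r : R, K r%:C.
Hypothesis hKs : forall z (t : R), K z -> K (z + t%:C).

Lemma approxB (L1 L2 : {poly C} -> C) : linF L1 -> linF L2 ->
  (exists h : {poly C}, (size h <= n.+1)%N /\ L1 h != 0) ->
  (exists h : {poly C}, (size h <= n.+1)%N /\ L2 h != 0) ->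
  forall g, RootsIn K g -> size g = n.+1 ->
  forall eta, 0 < eta -> exists g',
    [/\ RootsIn K g', size g' = n.+1, L1 g' != 0, L2 g' != 0 & dist g' g <= eta].
Proof.
move=> hL1 hL2 [h1 [sh1 nh1]] [h2 [sh2 nh2]] g hg hs eta heta.
have hs' : (size g <= n.+1)%N by rewrite hs.
have Pnz : forall L, linF L -> forall h : {poly C}, (size h <= n.+1)%N -> L h != 0 ->
    \poly_(i < n.+1) L (nderivn i g) != 0.
  move=> L hL h sh nh; apply: contra nh => /eqP P0; apply/eqP.
  apply: (triangular hL hs) => // i hi.
  by have := congr1 (fun p : {poly C} => p`_i) P0; rewrite coef_poly hi coef0.
have P1nz := Pnz _ hL1 _ sh1 nh1; have P2nz := Pnz _ hL2 _ sh2 nh2.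
set Mg := \sum_(j < n.+1) \sum_(i < n) nm ((nderivn i.+1 g)`_j).
have hMg : 0 <= Mg by apply: sumr_ge0 => j _; apply: sumr_ge0 => i _; exact: nm_ge0.
set t0 := Num.min 1 (eta / (Mg + 1)).
have ht0 : 0 < t0 by rewrite /t0 lt_min ltr01 /=; apply: divr_gt0 => //; lra.
case: (pick_t (mulf_neq0 P1nz P2nz) ht0) => t [ht htt0].
rewrite hornerM mulf_eq0 negb_or => /andP [q1 q2].
have ht1 : t <= 1 by apply: le_trans htt0 _; rewrite /t0 ge_min lexx.
have hte : t <= eta / (Mg + 1) by apply: le_trans htt0 _; rewrite /t0 ge_min lexx orbT.
have gn : g`_n != 0.
  have : lead_coef g != 0 by rewrite lead_coef_eq0 -size_poly_eq0 hs.
  by rewrite /lead_coef hs.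
exists (gt n g t); split.
- have sz : size (gt n g t) = n.+1.
    by apply: size_exact; [exact: size_gt| rewrite coef_gt_top].
  split; first by rewrite -size_poly_eq0 sz.
  move=> z; rewrite rootE gt_eval // -rootE => /(proj2 hg) hK.
  by have := hKs (- t) hK; rewrite -addrA -rmorphD /= subrr addr0.
- by apply: size_exact; [exact: size_gt| rewrite coef_gt_top].
- by rewrite (@lin_gt R n L1 g t hL1 hs').
- by rewrite (@lin_gt R n L2 g t hL2 hs').
- apply: le_trans (dist_gt hs' (ltW ht) ht1) _; rewrite -/Mg.
  have : t * Mg <= eta / (Mg + 1) * Mg by apply: ler_wpM2r.
  have : eta / (Mg + 1) * Mg <= eta.
    rewrite mulrAC ler_pdivrMr; last lra.
    by rewrite ler_pM2l //; lra.
  lra.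
Qed.

Lemma approx_all (L1 L2 : {poly C} -> C) : linF L1 -> linF L2 ->
  (exists h : {poly C}, (size h <= n.+1)%N /\ L1 h != 0) ->
  (exists h : {poly C}, (size h <= n.+1)%N /\ L2 h != 0) ->
  forall g, RootsIn K g -> (size g <= n.+1)%N ->
  forall eta, 0 < eta -> exists g',
    [/\ RootsIn K g', size g' = n.+1, L1 g' != 0, L2 g' != 0 & dist g' g <= eta].
Proof.
move=> hL1 hL2 nz1 nz2 g hg hs eta heta.
have he2 : 0 < eta / 2 by lra.
have hk : (size g + (n.+1 - size g) = n.+1)%N by rewrite subnKC.
case: (@liftA R n K hKr (n.+1 - size g) g hg hk _ he2) => g1 [hg1 hs1 hd1].
case: (approxB hL1 hL2 nz1 nz2 hg1 hs1 he2) => g2 [hg2 hs2 n1 n2 hd2].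
exists g2; split => //.
apply: le_trans (@dist_tri R n g2 g1 g) _; lra.
Qed.

End ApproxB.

Set Implicit Arguments. Unset Strict Implicit. Unset Printing Implicit Defensive.
Local Notation "x %:C" := (real_complex _ x) (format "x %:C") : ring_scope.

Section MainSec.
Variable R : realType.
Local Notation C := (R[i]).
Local Notation Im := complex.Im.
Variables (n m : nat) (T S : {poly C} -> {poly C}) (a b c d : C).
Hypothesis hTlin : forall (k : C) (f g : {poly C}), (size f <= n.+1)%N -> (size g <= n.+1)%N ->
     T (k *: f + g) = k *: T f + T g.
Hypothesis hTsz : forall f : {poly C}, (size f <= n.+1)%N -> (size (T f) <= m.+1)%N.
Hypothesis hmax : exists f : {poly C}, (size f <= n.+1)%N /\ (size (T f) = m.+1)%N.
Hypothesis hD : a * d - b * c != 0.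
Hypothesis hS : forall f : {poly C}, (size f <= n.+1)%N ->
     (size (S f) <= m.+1)%N /\ phi a b c d m (S f) = T (phi a b c d n f).
Local Notation D := (a * d - b * c).
Local Notation dist := (@dist R n).
Local Notation linF := (@linF R n).

Lemma phi_inj (k : nat) (p q : {poly C}) : (size p <= k.+1)%N -> (size q <= k.+1)%N ->
  phi a b c d k p = phi a b c d k q -> p = q.
Proof.
move=> hp hq e; have := phi_inv hD hp; rewrite e phi_inv // => /eqP.
by rewrite (inj_eq (scalerI _)) ?expf_neq0 // => /eqP.
Qed.

Lemma phi_eq0 (k : nat) (p : {poly C}) : (size p <= k.+1)%N -> phi a b c d k p = 0 -> p = 0.
Proof. by move=> hp e; apply: (phi_inj hp); [rewrite size_poly0| rewrite e phi0]. Qed.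

Lemma phi_surj (k : nat) (f : {poly C}) : (size f <= k.+1)%N ->
  exists g : {poly C}, (size g <= k.+1)%N /\ phi a b c d k g = f.
Proof.
move=> hf.
have hD' : d * a - - b * - c != 0 by have -> : d * a - - b * - c = D by ring.
exists ((D ^+ k)^-1 *: phi d (- b) (- c) a k f); split.
  by apply: leq_trans (size_scale_leq _ _) _; exact: size_phi.
have := phi_lin a b c d k ((D ^+ k)^-1) (phi d (- b) (- c) a k f) 0.
rewrite addr0 phi0 addr0 => ->.
have := phi_inv hD' hf; rewrite !opprK => ->.
have -> : d * a - - b * - c = D by ring.
by rewrite scalerA mulVf ?scale1r // expf_neq0.
Qed.

Lemma S_lin (k : C) (f g : {poly C}) : (size f <= n.+1)%N -> (size g <= n.+1)%N ->
  S (k *: f + g) = k *: S f + S g.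
Proof.
move=> hf hg.
have hfg : (size (k *: f + g)%R <= n.+1)%N.
  apply: leq_trans (size_polyD _ _) _; rewrite geq_max hg andbT.
  exact: leq_trans (size_scale_leq _ _) hf.
apply: (@phi_inj m).
- by case: (hS hfg).
- apply: leq_trans (size_polyD _ _) _; rewrite geq_max (proj1 (hS hg)) andbT.
  exact: leq_trans (size_scale_leq _ _) (proj1 (hS hf)).
rewrite (proj2 (hS hfg)) phi_lin hTlin ?size_phi // phi_lin.
by rewrite (proj2 (hS hf)) (proj2 (hS hg)).
Qed.

Lemma S0 : S 0 = 0.
Proof.
have h0 : (size (0 : {poly C})%R <= n.+1)%N by rewrite size_poly0.
have := S_lin (-1) h0 h0.
by rewrite scaler0 addr0 scaleN1r addNr.
Qed.

Lemma szS (f : {poly C}) : (size f <= n.+1)%N -> (size (S f) <= m.+1)%N.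
Proof. by move=> h; case: (hS h). Qed.

Lemma phiS (f : {poly C}) : (size f <= n.+1)%N -> phi a b c d m (S f) = T (phi a b c d n f).
Proof. by move=> h; case: (hS h). Qed.

Definition Lam1 (g : {poly C}) := (phi a b c d n g)`_n.
Definition Lam2 (g : {poly C}) := (phi a b c d m (S g))`_m.

Lemma Lam1_lin : linF Lam1.
Proof. by move=> k f g hf hg; rewrite /Lam1 phi_lin coefD coefZ. Qed.

Lemma Lam2_lin : linF Lam2.
Proof. by move=> k f g hf hg; rewrite /Lam2 S_lin // phi_lin coefD coefZ. Qed.

Lemma Lam1_nz : exists h : {poly C}, (size h <= n.+1)%N /\ Lam1 h != 0.
Proof.
case: (phi_surj (k := n) (f := 'X^n)); first by rewrite size_polyXn.
move=> g [hg e]; exists g; split => //; by rewrite /Lam1 e coefXn eqxx oner_eq0.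
Qed.

Lemma Lam2_nz : exists h : {poly C}, (size h <= n.+1)%N /\ Lam2 h != 0.
Proof.
case: hmax => f [hf hTf]; case: (phi_surj hf) => g [hg e].
exists g; split => //; rewrite /Lam2 phiS // e.
have : T f != 0 by rewrite -size_poly_eq0 hTf.
move=> T0; have := lead_coef_eq0 (T f); rewrite /lead_coef hTf /= => ->; done.
Qed.

Definition Lz (z : C) (p : {poly C}) := (S p).[z].

Lemma Lz_lin z : linF (Lz z).
Proof. by move=> k f g hf hg; rewrite /Lz S_lin // hornerD hornerZ. Qed.

Lemma S_bound (z : C) : exists2 K : R, 0 <= K & forall g' g : {poly C},
  (size g' <= n.+1)%N -> (size g <= n.+1)%N ->
  nm ((S g').[z] - (S g).[z]) <= K * dist g' g.
Proof.
exists (\sum_(i < n.+1) nm (Lz z 'X^i)).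
  by apply: sumr_ge0 => i _; exact: nm_ge0.
move=> g' g h1 h2.
have hd : (size (g' - g)%R <= n.+1)%N.
  by apply: leq_trans (size_polyD _ _) _; rewrite size_polyN geq_max h1 h2.
have -> : (S g').[z] - (S g).[z] = Lz z (g' - g).
  have e : g' - g = (-1) *: g + g' by rewrite scaleN1r addrC.
  by rewrite /Lz e S_lin // hornerD hornerZ mulN1r addrC.
rewrite (linF_expand (Lz_lin z) hd).
apply: le_trans (nm_sum _ _) _.
rewrite /dist mulr_sumr; apply: ler_sum => i _.
rewrite nmM coefB mulrC; apply: ler_wpM2r; first exact: nm_ge0.
rewrite (bigD1 i) //= lerDl; apply: sumr_ge0 => j _; exact: nm_ge0.
Qed.

Lemma S_limit (s : R) (g : {poly C}) : s * s = 1 -> (size g <= n.+1)%N ->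
  (forall eta : R, 0 < eta -> exists g' : {poly C}, [/\ (size g' <= n.+1)%N, dist g' g <= eta & noroot s (S g')]) ->
  noroot s (S g).
Proof.
move=> ss hg hfam; apply: (@stable_limit R s m) => //; first exact: szS.
move=> z1 z2 eta heta.
case: (S_bound z1) => K1 hK1 b1; case: (S_bound z2) => K2 hK2 b2.
have he : 0 < eta / (K1 + K2 + 1) by apply: divr_gt0 => //; lra.
case: (hfam _ he) => g' [hs' hd' hn'].
have hd0 : 0 <= dist g' g by exact: dist_ge0.
have key : forall K, 0 <= K -> K <= K1 + K2 -> K * dist g' g <= eta.
  move=> K hK hKK; apply: le_trans (_ : (K1 + K2 + 1) * (eta / (K1 + K2 + 1)) <= eta).
    apply: ler_pM => //; lra.
  by rewrite mulrC mulfVK ?gt_eqF //; lra.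
exists (S g'); split; first exact: szS.
split; first exact: hn'.
split.
- by apply: le_trans (b1 _ _ hs' hg) _; apply: key => //; lra.
- by apply: le_trans (b2 _ _ hs' hg) _; apply: key => //; lra.
Qed.

Local Notation Cd := (circ_dom a b c d).
Local Notation Phi := (mobius a b c d).
Local Notation Psi := (mobius d (- b) (- c) a).

Definition Kup (z : C) : Prop := Im z <= 0.
Definition Kre (z : C) : Prop := Im z = 0.

Lemma hKr_up (r : R) : Kup r%:C. Proof. by rewrite /Kup /=. Qed.
Lemma hKs_up z (t : R) : Kup z -> Kup (z + t%:C).
Proof. by rewrite /Kup ImD /= addr0. Qed.
Lemma hKr_re (r : R) : Kre r%:C. Proof. by rewrite /Kre /=. Qed.
Lemma hKs_re z (t : R) : Kre z -> Kre (z + t%:C).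
Proof. by rewrite /Kre ImD /= addr0. Qed.

Lemma stable_up (g : {poly C}) : stable (upperH (R:=R)) g <-> RootsIn Kup g.
Proof.
split=> [[g0 h]|[g0 h]]; split => // z.
  move=> hr; rewrite /Kup leNgt; apply/negP => hp.
  by have := h z; rewrite upperHE hp hr => /(_ isT).
rewrite upperHE => hp; apply/negP => /h; rewrite /Kup leNgt hp.
by [].
Qed.

Lemma noroot_up (q : {poly C}) : noroot 1 q <-> (stable (upperH (R:=R)) q \/ q = 0).
Proof.
split=> [[->|h]|[h|->]]; [by right| | |by left].
  case: (eqVneq q 0) => [->|q0]; first by right.
  by left; apply/stable_up; split => // z /h; rewrite mul1r.
by right; move/stable_up: h => [_ h] z /h; rewrite mul1r.
Qed.

Lemma zeros_re (g : {poly C}) : zeros_in (realLine (R:=R)) g <-> RootsIn Kre g.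
Proof.
split=> [[g0 h]|[g0 h]]; split => // z /h; rewrite realLineE /Kre.
  by move/eqP.
by move=> ->.
Qed.

Lemma noroot_re (q : {poly C}) : (noroot 1 q /\ noroot (-1) q) <->
  (zeros_in (realLine (R:=R)) q \/ q = 0).
Proof.
split.
  move=> [[e|h1] [e2|h2]]; try by right.
  case: (eqVneq q 0) => [->|q0]; first by right.
  left; apply/zeros_re; split => // z hz; rewrite /Kre.
  have := h1 z hz; have := h2 z hz; rewrite mul1r mulN1r; lra.
move=> [/zeros_re [q0 h]|->]; last by split; left.
by split; right => z /h; rewrite /Kre => ->; rewrite mulr0.
Qed.

Lemma limit_gen (K : C -> Prop) (s : R) : (forall r : R, K r%:C) ->
  (forall z (t : R), K z -> K (z + t%:C)) -> s * s = 1 ->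
  (forall g', RootsIn K g' -> size g' = n.+1 -> Lam1 g' != 0 -> Lam2 g' != 0 -> noroot s (S g')) ->
  forall g, RootsIn K g -> (size g <= n.+1)%N -> noroot s (S g).
Proof.
move=> hKr hKs ss H g hg hs; apply: (S_limit ss hs) => eta heta.
case: (approx_all hKr hKs Lam1_lin Lam2_lin Lam1_nz Lam2_nz hg hs heta).
move=> g' [h1 h2 h3 h4 h5]; exists g'; split => //; first by rewrite h2.
exact: H.
Qed.

Lemma root_pull (k : nat) (q : {poly C}) (z : C) : (size q <= k.+1)%N -> c * z + d != 0 ->
  root (phi a b c d k q) z -> root q (Phi z).
Proof.
move=> hs hz; rewrite !rootE phi_eval // mulf_eq0 expf_eq0 (negbTE hz) andbF /=.
by [].
Qed.

Lemma root_push (k : nat) (q : {poly C}) (w : C) : (size q <= k.+1)%N ->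
  (phi a b c d k q)`_k != 0 -> root q w ->
  [/\ a - c * w != 0, c * Psi w + d != 0, Phi (Psi w) = w & root (phi a b c d k q) (Psi w)].
Proof.
move=> hs hl hr.
have hne : a - c * w != 0.
  apply/eqP => e; move: hl; rewrite (phi_top_eval _ _ hs e).
  by move/rootP: hr => ->; rewrite mulr0 eqxx.
have hden := psi_den_neq0 hD hne; have hpsi := phi_psi hD hne.
split => //; rewrite rootE phi_eval // hpsi; move/rootP: hr => ->; by rewrite mulr0.
Qed.

Lemma top_neq0 (f : {poly C}) (k : nat) : size f = k.+1 -> f`_k != 0.
Proof.
move=> h; have : lead_coef f != 0 by rewrite lead_coef_eq0 -size_poly_eq0 h.
by rewrite /lead_coef h.
Qed.

Lemma size_phiN (g : {poly C}) : Lam1 g != 0 -> size (phi a b c d n g) = n.+1.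
Proof. by move=> h; apply: size_exact => //; exact: size_phi. Qed.

Lemma i_iii :
  (forall f : {poly C}, size f = n.+1 -> stable Cd f -> stable Cd (T f) \/ T f = 0) ->
  forall g : {poly C}, (size g <= n.+1)%N -> stable (upperH (R:=R)) g ->
    stable (upperH (R:=R)) (S g) \/ S g = 0.
Proof.
move=> Hi g hs /stable_up hst; apply/noroot_up.
apply: (limit_gen hKr_up hKs_up (mulr1 1)) hst hs => g' hg' hs' l1 l2.
have hs'' : (size g' <= n.+1)%N by rewrite hs'.
have hsf := size_phiN l1.
have hstf : stable Cd (phi a b c d n g').
  split; first by rewrite -size_poly_eq0 hsf.
  move=> z; rewrite CdE => /andP [hz hpos]; apply/negP => hr.
  have := (proj2 hg') _ (root_pull hs'' hz hr); rewrite /Kup leNgt hpos.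
  by [].
case: (eqVneq (S g') 0) => [->|Sn]; first by left.
right => w hw; rewrite mul1r leNgt; apply/negP => hpos.
have [hne hden hpsi hroot] := root_push (szS hs'') l2 hw.
case: (Hi _ hsf hstf) => [[_ hT]|hT0].
  have := hT (Psi w); rewrite CdE hden hpsi hpos -(phiS hs'') hroot.
  by move=> /(_ isT).
by move: Sn; rewrite (phi_eq0 (szS hs'') (etrans (phiS hs'') hT0)) eqxx.
Qed.

Lemma iii_i :
  (forall g : {poly C}, (size g <= n.+1)%N -> stable (upperH (R:=R)) g ->
    stable (upperH (R:=R)) (S g) \/ S g = 0) ->
  forall f : {poly C}, size f = n.+1 -> stable Cd f -> stable Cd (T f) \/ T f = 0.
Proof.
move=> H f hsf [f0 hf].
have hsf' : (size f <= n.+1)%N by rewrite hsf.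
case: (phi_surj hsf') => g [hg e].
have hl : (phi a b c d n g)`_n != 0 by rewrite e top_neq0.
have hstg : stable (upperH (R:=R)) g.
  split.
    by apply: contra f0 => /eqP g0; rewrite -e g0 phi0.
  move=> w; rewrite upperHE => hpos; apply/negP => hr.
  have [hne hden hpsi hroot] := root_push hg hl hr.
  have := hf (Psi w); rewrite CdE hden hpsi hpos -e hroot.
  by move=> /(_ isT).
case: (H g hg hstg) => [[S0 hS0]|S0]; last first.
  by right; rewrite -e -(phiS hg) S0 phi0.
left; split.
  by apply: contra S0 => /eqP T0; apply/eqP; apply: (phi_eq0 (szS hg)); rewrite phiS // e.
move=> z; rewrite CdE => /andP [hz hpos]; apply/negP => hr.
have : root (S g) (Phi z).
  by apply: (root_pull (szS hg) hz); rewrite phiS // e.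
by apply/negP; apply: hS0; rewrite upperHE.
Qed.

Lemma ii_iii :
  (forall g : {poly C}, size g = n.+1 -> stable (upperH (R:=R)) g ->
    stable (upperH (R:=R)) (S g) \/ S g = 0) ->
  forall g : {poly C}, (size g <= n.+1)%N -> stable (upperH (R:=R)) g ->
    stable (upperH (R:=R)) (S g) \/ S g = 0.
Proof.
move=> H g hs /stable_up hst; apply/noroot_up.
apply: (limit_gen hKr_up hKs_up (mulr1 1)) hst hs => g' hg' hs' l1 l2.
by apply/noroot_up; apply: H => //; apply/stable_up.
Qed.

Lemma re_core (P : {poly C} -> Prop) :
  (forall g' : {poly C}, RootsIn Kre g' -> size g' = n.+1 -> Lam1 g' != 0 -> Lam2 g' != 0 ->
     S g' = 0 \/ forall w, root (S g') w -> Im w = 0) ->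
  forall g : {poly C}, (size g <= n.+1)%N -> zeros_in (realLine (R:=R)) g ->
    zeros_in (realLine (R:=R)) (S g) \/ S g = 0.
Proof.
move=> H g hs /zeros_re hg; apply/noroot_re.
have K1 : forall s : R, s * s = 1 ->
    (forall g', RootsIn Kre g' -> size g' = n.+1 -> Lam1 g' != 0 -> Lam2 g' != 0 -> noroot s (S g')) ->
    noroot s (S g).
  by move=> s ss Hh; exact: (@limit_gen Kre s hKr_re hKs_re ss Hh g hg hs).
split.
  apply: (K1 1 (mulr1 1)) => g' hg' hs' l1 l2.
  case: (H g' hg' hs' l1 l2) => [->|h]; [by left| by right => w /h ->; rewrite mulr0].
have ss : (-1 : R) * (-1) = 1 by rewrite mulrNN mulr1.
apply: (K1 (-1) ss) => g' hg' hs' l1 l2.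
case: (H g' hg' hs' l1 l2) => [->|h]; [by left| by right => w /h ->; rewrite mulr0].
Qed.

Lemma iv_vi :
  (forall f : {poly C}, size f = n.+1 -> zeros_in (boundary Cd) f ->
     zeros_in (boundary Cd) (T f) \/ T f = 0) ->
  forall g : {poly C}, (size g <= n.+1)%N -> zeros_in (realLine (R:=R)) g ->
    zeros_in (realLine (R:=R)) (S g) \/ S g = 0.
Proof.
move=> Hiv; apply: (re_core (fun _ => True)) => g' hg' hs' l1 l2.
have hs'' : (size g' <= n.+1)%N by rewrite hs'.
have hsf := size_phiN l1.
have hzf : zeros_in (boundary Cd) (phi a b c d n g').
  split; first by rewrite -size_poly_eq0 hsf.
  move=> z hr; apply/(bdryE hD).
  case: (eqVneq (c * z + d) 0) => [->|hz]; first by left.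
  by right; apply: (proj2 hg'); exact: root_pull hs'' hz hr.
case: (eqVneq (S g') 0) => [->|Sn]; first by left.
right => w hw.
have [hne hden hpsi hroot] := root_push (szS hs'') l2 hw.
case: (Hiv _ hsf hzf) => [[_ hT]|hT0].
  rewrite (phiS hs'') in hroot.
  case/(bdryE hD): (hT _ hroot) => [e|]; first by move: hden; rewrite e eqxx.
  by rewrite hpsi.
by move: Sn; rewrite (phi_eq0 (szS hs'') (etrans (phiS hs'') hT0)) eqxx.
Qed.

Lemma vi_iv :
  (forall g : {poly C}, (size g <= n.+1)%N -> zeros_in (realLine (R:=R)) g ->
    zeros_in (realLine (R:=R)) (S g) \/ S g = 0) ->
  forall f : {poly C}, size f = n.+1 -> zeros_in (boundary Cd) f ->
     zeros_in (boundary Cd) (T f) \/ T f = 0.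
Proof.
move=> H f hsf [f0 hf].
have hsf' : (size f <= n.+1)%N by rewrite hsf.
case: (phi_surj hsf') => g [hg e].
have hl : (phi a b c d n g)`_n != 0 by rewrite e top_neq0.
have hzg : zeros_in (realLine (R:=R)) g.
  apply/zeros_re; split.
    by apply: contra f0 => /eqP g0; rewrite -e g0 phi0.
  move=> w hr.
  have [hne hden hpsi hroot] := root_push hg hl hr.
  rewrite e in hroot; case/(bdryE hD): (hf _ hroot) => [ee|].
    by move: hden; rewrite ee eqxx.
  by rewrite hpsi.
case: (H g hg hzg) => [/zeros_re [S0 hS0]|S0]; last first.
  by right; rewrite -e -(phiS hg) S0 phi0.
left; split.
  by apply: contra S0 => /eqP T0; apply/eqP; apply: (phi_eq0 (szS hg)); rewrite phiS // e.
move=> z hr; apply/(bdryE hD).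
case: (eqVneq (c * z + d) 0) => [->|hz]; first by left.
right; apply: hS0; apply: (root_pull (szS hg) hz); by rewrite phiS // e.
Qed.

Lemma v_vi :
  (forall g : {poly C}, size g = n.+1 -> zeros_in (realLine (R:=R)) g ->
    zeros_in (realLine (R:=R)) (S g) \/ S g = 0) ->
  forall g : {poly C}, (size g <= n.+1)%N -> zeros_in (realLine (R:=R)) g ->
    zeros_in (realLine (R:=R)) (S g) \/ S g = 0.
Proof.
move=> H; apply: (re_core (fun _ => True)) => g' hg' hs' l1 l2.
case: (H g' hs' (proj2 (zeros_re g') hg')) => [/zeros_re [_ h]|->]; last by left.
by right.
Qed.

End MainSec.

Unset Implicit Arguments. Set Strict Implicit. Set Printing Implicit Defensive.
Theorem mainTheorem17 (R : realType) (n m : nat) (T S : {poly R[i]} -> {poly R[i]})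
    (a b c d : R[i]) :
  (* T is linear on C_n[z] with values in C_m[z] *)
  (forall (k : R[i]) (f g : {poly R[i]}), (size f <= n.+1)%N -> (size g <= n.+1)%N ->
     T (k *: f + g) = k *: T f + T g) ->
  (forall f : {poly R[i]}, (size f <= n.+1)%N -> (size (T f) <= m.+1)%N) ->
  (* m = max { deg T(f) : f in C_n[z] } *)
  (exists f : {poly R[i]}, (size f <= n.+1)%N /\ (size (T f) = m.+1)%N) ->
  (* Phi is a Mobius transformation, normalized with c = 0 when C is a half-plane *)
  a * d - b * c != 0 ->
  (is_half_plane (circ_dom a b c d) -> c = 0) ->
  (* S = phi_m^{-1} T phi_n : C_n[z] -> C_m[z] *)
  (forall f : {poly R[i]}, (size f <= n.+1)%N ->
     (size (S f) <= m.+1)%N /\ phi a b c d m (S f) = T (phi a b c d n f)) ->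
  ((forall f : {poly R[i]}, (size f = n.+1)%N -> stable (circ_dom a b c d) f ->
        stable (circ_dom a b c d) (T f) \/ T f = 0)
     <-> (forall f : {poly R[i]}, (size f = n.+1)%N -> stable (upperH (R:=R)) f ->
        stable (upperH (R:=R)) (S f) \/ S f = 0)) /\
  ((forall f : {poly R[i]}, (size f = n.+1)%N -> stable (upperH (R:=R)) f ->
        stable (upperH (R:=R)) (S f) \/ S f = 0)
     <-> (forall f : {poly R[i]}, (size f <= n.+1)%N -> stable (upperH (R:=R)) f ->
        stable (upperH (R:=R)) (S f) \/ S f = 0)) /\
  ((forall f : {poly R[i]}, (size f = n.+1)%N -> zeros_in (boundary (circ_dom a b c d)) f ->
        zeros_in (boundary (circ_dom a b c d)) (T f) \/ T f = 0)
     <-> (forall f : {poly R[i]}, (size f = n.+1)%N -> zeros_in (realLine (R:=R)) f ->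
        zeros_in (realLine (R:=R)) (S f) \/ S f = 0)) /\
  ((forall f : {poly R[i]}, (size f = n.+1)%N -> zeros_in (realLine (R:=R)) f ->
        zeros_in (realLine (R:=R)) (S f) \/ S f = 0)
     <-> (forall f : {poly R[i]}, (size f <= n.+1)%N -> zeros_in (realLine (R:=R)) f ->
        zeros_in (realLine (R:=R)) (S f) \/ S f = 0)).
Proof.
move=> hTlin hTsz hmax hD _ hS.
have A := @i_iii R n m T S a b c d hTlin hmax hD hS.
have B := @iii_i R n m T S a b c d hD hS.
have Cc := @ii_iii R n m T S a b c d hTlin hmax hD hS.
have E := @iv_vi R n m T S a b c d hTlin hmax hD hS.
have F := @vi_iv R n m T S a b c d hD hS.
have G := @v_vi R n m T S a b c d hTlin hmax hD hS.
split; [|split; [|split]].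
- split=> H.
    by move=> f hf hst; apply: (A H) => //; rewrite hf.
  exact: B (Cc H).
- split=> H; first exact: Cc H.
  by move=> f hf; apply: H; rewrite hf.
- split=> H.
    by move=> f hf hz; apply: (E H) => //; rewrite hf.
  exact: F (G H).
- split=> H; first exact: G H.
  by move=> f hf; apply: H; rewrite hf.
Qed.
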